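(* Let $b_k>0$ for all $k\ge0$ and suppose that for some $m$, $$\frac{a_0}{b_0}\le\frac{a_1}{b_1}\le\dots\le\frac{a_m}{b_m},\qquad \frac{a_m}{b_m}\ge\frac{a_{m+1}}{b_{m+1}}\ge\frac{a_{m+2}}{b_{m+2}}\ge\cdots,$$ with at least one strict inequality in each chain. Let $$F(x)=\frac{A(x)}{B(x)}=\frac{\sum_{k=0}^\infty a_k(x)_k}{\sum_{k=0}^\infty b_k(x)_k},$$ and assume each series converges uniformly on all compact subsets of $\mathbb{R}$. Then $F(x+1)-F(x)<0$ for all sufficiently large $x$.
   Context: $(x)_k=x(x+1)\cdots(x+k-1)$ is the Pochhammer symbol, $(x)_0=1$. *)

(* Defs.v *)
From HB Require Import structures.
From mathcomp Require Import all_boot all_order all_algebra.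
From mathcomp Require Import all_classical all_reals all_analysis.
Set Implicit Arguments. Unset Strict Implicit. Unset Printing Implicit Defensive.
Import Order.TTheory GRing.Theory Num.Theory.
Local Open Scope ring_scope.

Definition pochhammer {R : numDomainType} (x : R) (k : nat) : R :=
  \prod_(i < k) (x + i%:R).

Definition poch_partial {R : numDomainType} (c : nat -> R) (n : nat) (x : R) : R :=
  \sum_(k < n) c k * pochhammer x k.

(* Main.v *)
Require Import Defs.
From HB Require Import structures.
From mathcomp Require Import all_boot all_order all_algebra.
From mathcomp Require Import all_classical all_reals all_analysis.
From mathcomp Require Import ring lra zify.
Import Order.TTheory GRing.Theory Num.Theory.
Import numFieldTopology.Exports numFieldNormedType.Exports.
Local Open Scope classical_set_scope.
Local Open Scope ring_scope.
Section P1.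
Variable R : realType.
Implicit Types x : R.

Lemma pochS x k : pochhammer x k.+1 = pochhammer x k * (x + k%:R).
Proof. by rewrite /pochhammer big_ord_recr. Qed.

Lemma poch0 x : pochhammer x 0 = 1.
Proof. by rewrite /pochhammer big_ord0. Qed.

Lemma poch_gt0 x k : 0 < x -> 0 < pochhammer x k.
Proof.
move=> x0; rewrite /pochhammer; apply: prodr_gt0 => i _.
by apply: ltr_wpDr.
Qed.

Lemma poch_shift x k : x * pochhammer (x + 1) k = pochhammer x k * (x + k%:R).
Proof.
elim: k => [|k IH]; first by rewrite !poch0 addr0 mul1r mulr1.
rewrite pochS mulrA IH pochS -natr1; ring.
Qed.

Lemma poch_ge1 x j k : 1 <= x -> (j <= k)%N -> pochhammer x j <= pochhammer x k.
Proof.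
move=> x1; elim: k => [|k IH]; first by rewrite leqn0 => /eqP ->.
rewrite leq_eqVlt => /orP[/eqP -> //|]; rewrite ltnS => /IH h.
apply: (le_trans h); rewrite pochS ler_peMr //.
  by apply/ltW/poch_gt0; apply: (lt_le_trans ltr01).
by rewrite (le_trans x1) // lerDl.
Qed.

Lemma poch_lt x j k : 1 <= x -> (j < k)%N -> x * pochhammer x j <= pochhammer x k.
Proof.
move=> x1 jk; apply: (le_trans _ (@poch_ge1 x j.+1 k x1 jk)).
rewrite pochS mulrC ler_wpM2l //.
  by apply/ltW/poch_gt0; apply: (lt_le_trans ltr01).
by rewrite lerDl.
Qed.
End P1.
Section P2.
Variable R : realType.
Implicit Types x : R.
Lemma shift_sum (c : nat -> R) n x :
  x * poch_partial c n (x + 1) =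
  x * poch_partial c n x + \sum_(k < n) k%:R * c k * pochhammer x k.
Proof.
rewrite /poch_partial !mulr_sumr -big_split /=; apply: eq_bigr => k _.
by rewrite mulrCA poch_shift; ring.
Qed.

Lemma D_identity (a b : nat -> R) n x :
  x * (poch_partial a n (x + 1) * poch_partial b n x
       - poch_partial a n x * poch_partial b n (x + 1)) =
  \sum_(k < n) \sum_(j < n)
     (k%:R - j%:R) * a k * b j * pochhammer x k * pochhammer x j.
Proof.
have -> : x * (poch_partial a n (x + 1) * poch_partial b n x
       - poch_partial a n x * poch_partial b n (x + 1)) =
   (x * poch_partial a n (x + 1)) * poch_partial b n x
       - poch_partial a n x * (x * poch_partial b n (x + 1)) by ring.
rewrite !shift_sum.
set Pa := poch_partial a n x; set Pb := poch_partial b n x.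
have -> : (x * Pa + \sum_(k < n) k%:R * a k * pochhammer x k) * Pb -
  Pa * (x * Pb + \sum_(k < n) k%:R * b k * pochhammer x k) =
  (\sum_(k < n) k%:R * a k * pochhammer x k) * Pb -
  Pa * (\sum_(k < n) k%:R * b k * pochhammer x k) by ring.
rewrite /Pa /Pb /poch_partial !mulr_suml -sumrB; apply: eq_bigr => k _.
rewrite !mulr_sumr -sumrB; apply: eq_bigr => j _.
ring.
Qed.

Lemma sym_sum (f : nat -> nat -> R) n :
  2 * (\sum_(k < n) \sum_(j < n) f k j) =
  \sum_(k < n) \sum_(j < n) (f k j + f j k).
Proof.
rewrite mulr2n mulrDl mul1r.
rewrite {2}(exchange_big) /= -big_split /=; apply: eq_bigr => k _.
by rewrite -big_split.
Qed.
End P2.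

Definition uk {R : realType} (m : nat) (M : R) (k j : nat) : R :=
  if (k < m)%N then (k + j + 2)%N%:R * M else 0.
Definition vk {R : realType} (N : nat) (d : R) (k j : nat) : R :=
  if (k == N) && (N < j)%N then d * (j - N)%:R else 0.
Definition Psum {R : realType} (beta : nat -> R) (m n : nat) : R :=
  \sum_(k < n) (if (k < m)%N then beta k else 0).
Definition Qsum {R : realType} (beta : nat -> R) (N n : nat) : R :=
  \sum_(j < n) (if (j < N.+1)%N then beta j else 0).
Definition Wsum {R : realType} (beta : nat -> R) (N n : nat) : R :=
  \sum_(j < n) (if (N < j)%N then (j - N)%:R * beta j else 0).
Section Q.
Variable R : realType.
Variables (r : nat -> R) (m N : nat) (M d : R).
Hypothesis Hrm : forall k, r k <= r m.
Hypothesis Hdec : forall j k, (m <= j)%N -> (j <= k)%N -> r k <= r j.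
Hypothesis HN : (m <= N)%N.
Hypothesis Hd : forall k, (N < k)%N -> r k <= r N - d.
Hypothesis HM : forall i, (i < m)%N -> r m - r i <= M.
Hypothesis M0 : 0 <= M.

Lemma helper i l : (i < m)%N ->
  (i%:R - l%:R) * (r i - r l) <= (i + l + 2)%N%:R * M.
Proof.
move=> im.
have hle : forall (p q : nat), (p%:R - q%:R : R) <= (i + l + 2)%N%:R ->
  forall e : R, e <= M -> 0 <= (p%:R - q%:R : R) -> (p%:R - q%:R) * e <= (i + l + 2)%N%:R * M.
  move=> p q h e eM h0.
  have eM' : 0 <= M - e by lra.
  have h1 := mulr_ge0 h0 eM'.
  have h2 : 0 <= ((i + l + 2)%N%:R - (p%:R - q%:R)) * M by apply: mulr_ge0 => //; lra.
  rewrite -subr_ge0.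
  have -> : (i + l + 2)%N%:R * M - (p%:R - q%:R) * e = (p%:R - q%:R) * (M - e) + ((i + l + 2)%N%:R - (p%:R - q%:R)) * M by ring.
  exact: addr_ge0.
case: (leqP i l) => il.
- have -> : (i%:R - l%:R) * (r i - r l) = (l%:R - i%:R) * (r l - r i) by ring.
  apply: hle.
  + rewrite natrD natrD; have := ler0n R i; lra.
  + by have := HM _ im; have := Hrm l; lra.
  + by rewrite subr_ge0 ler_nat.
- have lm : (l < m)%N by apply: ltn_trans il im.
  apply: hle.
  + rewrite natrD natrD; have := ler0n R l; lra.
  + by have := HM _ lm; have := Hrm i; lra.
  + by rewrite subr_ge0 ler_nat ltnW.
Qed.


Lemma uk_ge0 k j : 0 <= uk m M k j.
Proof. by rewrite /uk; case: ifP => // _; apply: mulr_ge0. Qed.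

Lemma pointwise k j :
  (k%:R - j%:R) * (r k - r j) <= uk m M k j + uk m M j k - vk N d k j - vk N d j k.
Proof.
case: (ltnP k m) => km.
  have kN : (k == N) = false by apply/negbTE; rewrite neq_ltn (leq_trans km HN).
  have jN : (N < k)%N = false by apply/negbTE; rewrite -leqNgt ltnW // (leq_trans km HN).
  rewrite /vk kN jN andbF /= subr0 subr0 /uk km.
  have := uk_ge0 j k; rewrite /uk => h.
  have := helper k j km; lra.
case: (ltnP j m) => jm.
  have jN : (j == N) = false by apply/negbTE; rewrite neq_ltn (leq_trans jm HN).
  have kN : (N < j)%N = false by apply/negbTE; rewrite -leqNgt ltnW // (leq_trans jm HN).
  rewrite /vk jN kN andbF /= subr0 subr0 /uk jm ltnNge km /= add0r.
  have := helper j k jm.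
  have -> : (j%:R - k%:R) * (r j - r k) = (k%:R - j%:R) * (r k - r j) by ring.
  by rewrite addnAC.
rewrite /uk ltnNge km ltnNge jm /= addr0 sub0r.
rewrite /vk.
case: ifP => [/andP[/eqP kN Nj]|hk].
  have jN : (j == N) = false by apply/negbTE; rewrite neq_ltn Nj orbT.
  rewrite jN /= subr0 kN.
  have e1 : (N%:R - j%:R : R) = - ((j - N)%:R).
    by rewrite natrB; [rewrite opprB | exact: ltnW].
  Timeout 10 rewrite e1 mulNr lerN2 [d * _]mulrC.
  Timeout 10 apply: ler_wpM2l; first exact: ler0n.
  Timeout 10 (have := Hd _ Nj; lra).
case: ifP => [/andP[/eqP jN Nk]|hj].
  rewrite oppr0 sub0r jN.
  have e1 : (k%:R - N%:R : R) = (k - N)%:R by rewrite natrB // ltnW.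
  Timeout 10 rewrite e1 mulrC -mulNr.
  Timeout 10 apply: ler_wpM2r; first exact: ler0n.
  Timeout 10 (have := Hd _ Nk; lra).
apply: (@le_trans _ _ 0); last by lra.
case: (leqP k j) => kj.
  apply: mulr_le0_ge0; first by rewrite subr_le0 ler_nat.
  by have := Hdec _ _ km kj; lra.
apply: mulr_ge0_le0; first by rewrite subr_ge0 ler_nat ltnW.
by have := Hdec _ _ jm (ltnW kj); lra.
Qed.
End Q.
Section S.
Variable R : realType.
Variables (r beta : nat -> R) (m N n : nat) (M d : R).
Hypothesis HN : (m <= N)%N.
Hypothesis Hn : (N.+2 <= n)%N.
Hypothesis bpos : forall k, 0 < beta k.
Hypothesis M0 : 0 <= M.


Local Notation P := (Psum beta m n).
Local Notation Q := (Qsum beta N n).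
Local Notation W := (Wsum beta N n).

Lemma W_ge : beta N.+1 <= W.
Proof.
have hN : (N.+1 < n)%N by [].
rewrite /Wsum (bigD1 (Ordinal hN)) //= ltnSn subSnn mul1r lerDl.
apply: sumr_ge0 => i _; case: ifP => // _; apply: mulr_ge0 => //.
exact: ltW.
Qed.

Lemma Q_ge0 : 0 <= Q.
Proof. by rewrite /Qsum; apply: sumr_ge0 => i _; case: ifP => // _; apply: ltW. Qed.

Lemma P_ge0 : 0 <= P.
Proof. by rewrite /Psum; apply: sumr_ge0 => i _; case: ifP => // _; apply: ltW. Qed.

Lemma V_sum : \sum_(k < n) \sum_(j < n) vk N d k j * (beta k * beta j) = d * beta N * W.
Proof.
have hN : (N < n)%N by apply: leq_trans Hn; rewrite ltnS leqnSn.
rewrite (bigD1 (Ordinal hN)) //=.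
rewrite [X in _ + X]big1 ?addr0; last first.
  move=> i hi; apply: big1 => j _.
  rewrite /vk (_ : (nat_of_ord i == N) = false) ?mul0r //.
  by apply: contraNF hi => /eqP hi; apply/eqP/val_inj.
rewrite /Wsum mulr_sumr; apply: eq_bigr => j _; rewrite /vk eqxx /=.
by case: ifP => _; [ring | rewrite !mul0r mulr0].
Qed.

Lemma U_sum : \sum_(k < n) \sum_(j < n) uk m M k j * (beta k * beta j) <=
  M * P * ((2 * N + 2)%N%:R * Q + (2 * N + 3)%N%:R * W).
Proof.
set C := (_ + _ : R).
have -> : M * P * C = P * (M * C) by ring.
rewrite /Psum mulr_suml; apply: ler_sum => k _.
rewrite /uk; case: ifP => km; last first.
  by rewrite big1 ?mul0r ?mulr0 // => j _; rewrite mul0r.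
rewrite /C /Qsum /Wsum !mulr_sumr -big_split /= !mulr_sumr; apply: ler_sum => j _.
have kN : (k < N)%N := leq_trans km HN.
have pos : 0 <= M * (beta k * beta j).
  by apply: mulr_ge0 => //; apply: mulr_ge0; apply: ltW.
have -> : (k + j + 2)%N%:R * M * (beta k * beta j) = (k + j + 2)%N%:R * (M * (beta k * beta j)) by ring.
case: ifP => jN; case: ifP => Nj.
- by move: jN Nj; rewrite ltnS leqNgt => /negbTE ->.
- rewrite mulr0 addr0.
  have -> : beta k * (M * ((2 * N + 2)%N%:R * beta j)) = (2 * N + 2)%N%:R * (M * (beta k * beta j)) by ring.
  apply: ler_wpM2r => //.
  by rewrite ler_nat; move: jN; rewrite ltnS => jN; lia.
- rewrite mulr0 add0r.
  have -> : beta k * (M * ((2 * N + 3)%N%:R * ((j - N)%:R * beta j))) = ((2 * N + 3) * (j - N))%N%:R * (M * (beta k * beta j)) by rewrite natrM; ring.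
  apply: ler_wpM2r => //.
  by rewrite ler_nat; nia.
- by move: jN Nj; rewrite ltnS leqNgt => /negbFE ->.
Qed.
End S.
Lemma final_arith (R : realType) (x M P Q W Pb Qb c bN bN1 bt d S n2 n3 : R) :
  S <= 2 * M * P * (n2 * Q + n3 * W) - 2 * d * (bN * c) * W ->
  1 <= x -> 0 <= M -> 0 <= P -> 0 <= Q -> bt <= W -> bN1 * x * c <= bt ->
  x * P <= Pb * c -> Q <= Qb * c -> 0 < c -> 0 < bN -> 0 < bN1 -> 0 < d ->
  2 * M * n3 * Pb <= d * bN * x -> 4 * M * n2 * Pb * Qb <= d * bN * bN1 * x ->
  0 <= n2 -> 0 <= n3 ->
  S <= - (d / 2) * bN * c * bt.
Proof.
move=> hS x1 M0 P0 Q0 hW hbt hP hQ c0 bN0 bN10 d0 hK1 hK2 n20 n30.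
have x0 : 0 < x by lra.
have hA : M * P * n3 <= d / 2 * bN * c.
  rewrite -(ler_pM2l x0).
  have e1 : x * (M * P * n3) = (M * n3) * (x * P) by ring.
  rewrite e1; apply: (le_trans (ler_wpM2l _ hP)).
    by apply: mulr_ge0.
  have e2 : M * n3 * (Pb * c) = (2 * M * n3 * Pb) * (c / 2) by field.
  rewrite e2.
  have e3 : x * (d / 2 * bN * c) = (d * bN * x) * (c / 2) by field.
  rewrite e3; apply: ler_wpM2r => //.
  by apply: divr_ge0; [apply: ltW | ].
have hB : 2 * M * P * n2 * Q <= d / 2 * bN * c * bt.
  rewrite -(ler_pM2l x0).
  have e1 : x * (2 * M * P * n2 * Q) = (2 * M * n2) * ((x * P) * Q) by ring.
  rewrite e1; apply: (le_trans (ler_wpM2l _ (ler_pM _ _ hP hQ))) => //.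
  - by apply: mulr_ge0 => //; apply: mulr_ge0 => //; lra.
  - by apply: mulr_ge0 => //; apply: ltW.
  have e2 : 2 * M * n2 * (Pb * c * (Qb * c)) = (4 * M * n2 * Pb * Qb) * (c * c / 2) by field.
  rewrite e2.
  have h1 : (4 * M * n2 * Pb * Qb) * (c * c / 2) <= (d * bN * bN1 * x) * (c * c / 2).
    apply: ler_wpM2r => //.
    by apply: divr_ge0 => //; apply: mulr_ge0; apply: ltW.
  apply: (le_trans h1).
  have e3 : d * bN * bN1 * x * (c * c / 2) = (x * (d / 2 * bN * c)) * (bN1 * c).
    by field.
  have e5 : x * (d / 2 * bN * c * bt) = (x * (d / 2 * bN * c)) * bt by ring.
  rewrite e3 e5; apply: ler_wpM2l.
    by apply: mulr_ge0; [lra | apply: mulr_ge0; [apply: mulr_ge0; [apply: divr_ge0; lra | lra] | lra]].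
  apply: le_trans hbt.
  have e4 : bN1 * x * c = bN1 * c * x by ring.
  rewrite e4 ler_peMr //.
  by apply: mulr_ge0; apply: ltW.
have hC : 0 <= d * (bN * c) by apply: mulr_ge0; [apply: ltW | apply: mulr_ge0; apply: ltW].
have hD := ler_wpM2l hC hW.
have hE : 2 * (M * P * n3) * W <= 2 * (d / 2 * bN * c) * W.
  apply: ler_wpM2r; first by apply: le_trans hW; apply: le_trans hbt; apply: mulr_ge0; [apply: mulr_ge0|]; apply: ltW.
  lra.
have e6 : 2 * M * P * (n2 * Q + n3 * W) = 2 * M * P * n2 * Q + 2 * (M * P * n3) * W by ring.
have e7 : 2 * (d / 2 * bN * c) * W = d * (bN * c) * W by field.
have e8 : - (d / 2) * bN * c * bt = d / 2 * bN * c * bt - d * (bN * c) * bt by field.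
rewrite e8; move: hS; rewrite e6 => hS.
rewrite e7 in hE.
have e9 : 2 * d * (bN * c) * W = 2 * (d * (bN * c) * W) by ring.
rewrite e9 in hS.
have e10 : d * (bN * c) * bt <= d * (bN * c) * W by [].
lra.
Qed.

Lemma combine (R : realType) (beta : nat -> R) (u v : nat -> nat -> R) n :
  \sum_(k < n) \sum_(j < n) (u k j + u j k - v k j - v j k) * (beta k * beta j)
  = 2 * (\sum_(k < n) \sum_(j < n) u k j * (beta k * beta j))
  - 2 * (\sum_(k < n) \sum_(j < n) v k j * (beta k * beta j)).
Proof.
rewrite (@sym_sum _ (fun k j => u k j * (beta k * beta j))).
rewrite (@sym_sum _ (fun k j => v k j * (beta k * beta j))) -sumrB; apply: eq_bigr => k _.
rewrite -sumrB; apply: eq_bigr => j _; ring.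
Qed.

Lemma ptw (R : realType) (a : nat -> R) (A : R -> R)
  (hA : forall K : set R, compact K ->
          {uniform K, poch_partial a @ \oo --> A}) x :
  (fun n => poch_partial a n x) @ \oo --> A x.
Proof.
have := hA _ (compact_set1 (x:=x)).
by rewrite uniform_set1.
Qed.

Lemma Bn_ge (R : realType) (b : nat -> R) (hb : forall k, 0 < b k) x n :
  0 < x -> (0 < n)%N -> b 0%N <= poch_partial b n x.
Proof.
move=> x0; case: n => // n _.
rewrite /poch_partial big_ord_recl /= poch0 mulr1 lerDl.
apply: sumr_ge0 => i _; apply: mulr_ge0; first exact: ltW.
exact/ltW/poch_gt0.
Qed.

Theorem lemma5 (R : realType) (a b : nat -> R) (A B : R -> R) (m : nat)
  (hb : forall k, 0 < b k)
  (hup : forall k, (k < m)%N -> a k / b k <= a k.+1 / b k.+1)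
  (hup_strict : exists2 k, (k < m)%N & a k / b k < a k.+1 / b k.+1)
  (hdown : forall k, (m <= k)%N -> a k.+1 / b k.+1 <= a k / b k)
  (hdown_strict : exists2 k, (m <= k)%N & a k.+1 / b k.+1 < a k / b k)
  (hA : forall K : set R, compact K ->
          {uniform K, poch_partial a @ \oo --> A})
  (hB : forall K : set R, compact K ->
          {uniform K, poch_partial b @ \oo --> B}) :
  \forall x \near +oo, A (x + 1) / B (x + 1) - A x / B x < 0.
Proof.
pose r k := a k / b k.
have ha : forall k, a k = r k * b k.
  by move=> k; rewrite /r divfK // gt_eqF.
have Hup : forall j, (j <= m)%N -> forall k, (k <= j)%N -> r k <= r j.
  elim=> [|j IH] jm k.
    by rewrite leqn0 => /eqP ->.
  rewrite leq_eqVlt => /orP[/eqP -> //|]; rewrite ltnS => kj.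
  apply: (le_trans (IH (ltnW jm) _ kj)); exact: hup.
have Hdec : forall j k, (m <= j)%N -> (j <= k)%N -> r k <= r j.
  move=> j; elim=> [|k IH] mj.
    by rewrite leqn0 => /eqP ->.
  rewrite leq_eqVlt => /orP[/eqP -> //|]; rewrite ltnS => jk.
  apply: le_trans (IH mj jk); apply: hdown; exact: leq_trans jk.
have Hrm : forall k, r k <= r m.
  move=> k; case: (leqP k m) => km; first exact: Hup.
  by apply: Hdec => //; apply: ltnW.
case: hdown_strict => N HN hNs.
pose d := r N - r N.+1.
have d0 : 0 < d by rewrite /d subr_gt0.
have Hd : forall k, (N < k)%N -> r k <= r N - d.
  move=> k Nk; rewrite /d opprB addrC subrK.
  by apply: Hdec => //; apply: leq_trans HN _.
pose M := \sum_(i < m) (r m - r i).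
have M0 : 0 <= M by apply: sumr_ge0 => i _; rewrite subr_ge0.
have HM : forall i, (i < m)%N -> r m - r i <= M.
  move=> i im; rewrite /M (bigD1 (Ordinal im)) //= lerDl.
  by apply: sumr_ge0 => j _; rewrite subr_ge0.
pose Pb := \sum_(k < m) b k.
pose Qb := \sum_(k < N.+1) b k.
pose n2 : R := (2 * N + 2)%N%:R.
pose n3 : R := (2 * N + 3)%N%:R.
pose K1 := 2 * M * n3 * Pb / (d * b N).
pose K2 := 4 * M * n2 * Pb * Qb / (d * b N * b N.+1).
exists (1 + `|K1| + `|K2|); split; first exact: num_real.
move=> x hx.
have x1 : 1 <= x by have := normr_ge0 K1; have := normr_ge0 K2; lra.
have x0 : 0 < x by lra.
have hK1 : 2 * M * n3 * Pb <= d * b N * x.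
  have : K1 <= x by have := ler_norm K1; have := normr_ge0 K2; lra.
  rewrite /K1 ler_pdivrMr; last by apply: mulr_gt0.
  by rewrite [x * _]mulrC.
have hK2 : 4 * M * n2 * Pb * Qb <= d * b N * b N.+1 * x.
  have : K2 <= x by have := ler_norm K2; have := normr_ge0 K1; lra.
  rewrite /K2 ler_pdivrMr; last by apply: mulr_gt0 => //; apply: mulr_gt0.
  by rewrite [x * _]mulrC.
pose c := pochhammer x N.
pose beta k := b k * pochhammer x k.
have bpos : forall k, 0 < beta k.
  by move=> k; apply: mulr_gt0 => //; apply: poch_gt0.
have c0 : 0 < c by apply: poch_gt0.
pose Dn n := poch_partial a n (x + 1) * poch_partial b n x
       - poch_partial a n x * poch_partial b n (x + 1).
have key : forall n, (N.+2 <= n)%N -> 2 * (x * Dn n) <= - (d / 2) * b N * c * beta N.+1.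
  move=> n hn.
  have hS : 2 * (x * Dn n) <= 2 * M * Psum beta m n * (n2 * Qsum beta N n + n3 * Wsum beta N n)
             - 2 * d * (b N * c) * Wsum beta N n.
    rewrite /Dn D_identity (@sym_sum _ (fun k j => (k%:R - j%:R) * a k * b j * pochhammer x k * pochhammer x j)).
    have step1 : \sum_(k < n) \sum_(j < n)
      ((k%:R - j%:R) * a k * b j * pochhammer x k * pochhammer x j +
       (j%:R - k%:R) * a j * b k * pochhammer x j * pochhammer x k)
      <= \sum_(k < n) \sum_(j < n) (uk m M k j + uk m M j k - vk N d k j - vk N d j k) * (beta k * beta j).
      apply: ler_sum => k _; apply: ler_sum => j _.
      have -> : (k%:R - j%:R) * a k * b j * pochhammer x k * pochhammer x j +
       (j%:R - k%:R) * a j * b k * pochhammer x j * pochhammer x k =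
       ((k%:R - j%:R) * (r k - r j)) * (beta k * beta j).
        by rewrite (ha k) (ha j) /beta; ring.
      apply: ler_wpM2r; first by apply: mulr_ge0; apply: ltW.
      exact: pointwise.
    apply: (le_trans step1); rewrite combine.
    have hU := @U_sum _ beta m N n M HN hn bpos M0.
    rewrite (@V_sum _ beta N n d hn).
    have -> : 2 * d * (b N * c) * Wsum beta N n = 2 * (d * beta N * Wsum beta N n) by rewrite /beta /c; ring.
    rewrite lerD2r.
    have -> : 2 * M * Psum beta m n * (n2 * Qsum beta N n + n3 * Wsum beta N n) =
      2 * (M * Psum beta m n * (n2 * Qsum beta N n + n3 * Wsum beta N n)) by ring.
    by rewrite ler_pM2l.
  apply: (@final_arith _ x M _ _ _ Pb Qb c (b N) (b N.+1) (beta N.+1) d _ n2 n3 hS x1 M0 (@P_ge0 _ beta m n bpos) (@Q_ge0 _ beta N n bpos) (@W_ge _ beta N n hn bpos)) => //.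
  - rewrite /beta -mulrA; apply: ler_wpM2l; first exact: ltW.
    by rewrite /c poch_lt.
  - rewrite /Psum /Pb (big_ord_widen n b (leq_trans HN (leq_trans (leqnSn N) (ltnW hn)))).
    rewrite mulr_sumr mulr_suml [X in _ <= X]big_mkcond /=; apply: ler_sum => k _.
    case: ifP => km; last by rewrite ?mulr0 ?mul0r.
    rewrite /beta mulrCA; apply: ler_wpM2l; first exact: ltW.
    by rewrite /c poch_lt // (leq_trans km HN).
  - rewrite /Qsum /Qb (big_ord_widen n b (ltnW hn)).
    rewrite mulr_suml [X in _ <= X]big_mkcond /=; apply: ler_sum => k _.
    case: ifP => km; last by rewrite ?mul0r.
    rewrite /beta; apply: ler_wpM2l; first exact: ltW.
    by rewrite /c poch_ge1.
have lim1 : (fun n => 2 * (x * Dn n)) @ \oo --> 2 * (x * (A (x + 1) * B x - A x * B (x + 1))).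
  apply: cvgM; first exact: cvg_cst.
  apply: cvgM; first exact: cvg_cst.
  apply: cvgB; apply: cvgM; exact: ptw.
have hD : 2 * (x * (A (x + 1) * B x - A x * B (x + 1))) <= - (d / 2) * b N * c * beta N.+1.
  apply: (cvgr_to_le lim1); exists N.+2 => // n /= hn; exact: key.
have hneg : - (d / 2) * b N * c * beta N.+1 < 0.
  rewrite !mulNr oppr_lt0; apply: mulr_gt0 => //; apply: mulr_gt0 => //.
  by apply: mulr_gt0 => //; apply: divr_gt0.
have Bge : forall y, 0 < y -> b 0%N <= B y.
  move=> y y0; apply: (cvgr_to_ge (@ptw _ b B hB y)); exists 1%N => // n /= hn.
  exact: Bn_ge.
have B0 : 0 < B x by apply: lt_le_trans (Bge _ x0).
have B1 : 0 < B (x + 1) by apply: (lt_le_trans (hb 0%N)); apply: Bge; lra.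
have Dneg : A (x + 1) * B x - A x * B (x + 1) < 0.
  have := le_lt_trans hD hneg.
  by rewrite pmulr_rlt0 // pmulr_rlt0.
have -> : A (x + 1) / B (x + 1) - A x / B x =
  (A (x + 1) * B x - A x * B (x + 1)) / (B x * B (x + 1)).
  by field; apply/andP; split; apply: lt0r_neq0.
by rewrite ltr_pdivrMr ?mul0r //; apply: mulr_gt0.
Qed.
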